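(* Let $n\ge1$ and $d\ge2$ be integers. Let $T$ be any rooted tree that contains, as a topological minor, every rooted tree with $n$ leaves and no degree-1 nodes. Then the number of nodes of $T$ of degree at least $d$ is at least $$\sum_{s\ge2,\ (s-1)(d-1)+1\le n} u\big(\lfloor n/((s-1)(d-1)+1)\rfloor\big).$$ Here $u(m)$ denotes the minimum number of leaves of a rooted tree that contains, as a topological minor, every rooted tree with $m$ leaves and no degree-1 nodes.
   Context: Trees are rooted and unordered, with edges directed from parent to child. The degree of a node is its number of children; a degree-1 node has exactly one child. $T'$ is a topological minor of $T$ if there is an injective map $f$ from the nodes of $T'$ to the nodes of $T$ with $f(\mathsf{NCA}(u,v))=\mathsf{NCA}(f(u),f(v))$ for all $u,v$. Equivalently, $T$ contains a subdivision of $T'$ as a subgraph. $\mathsf{NCA}$ denotes the nearest common ancestor. *)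

(* Defs.v *)
From mathcomp Require Import all_boot.
From Stdlib Require Import ClassicalEpsilon.
Set Implicit Arguments. Unset Strict Implicit. Unset Printing Implicit Defensive.

(* Finite rooted trees; the order of children is irrelevant for every notion
   below (all are invariant under permuting children), so these model rooted
   unordered trees. *)
Inductive rtree := Node of seq rtree.

Definition children (t : rtree) : seq rtree := let: Node ts := t in ts.

(* Nodes are addressed by paths from the root: a path [:: i1; ...; ik]
   selects child i1 of the root, then child i2 of that, etc. *)
Fixpoint subt (t : rtree) (p : seq nat) : option rtree :=
  match p with
  | [::] => Some t
  | i :: p' => if i < size (children t) then subt (nth t (children t) i) p'
               else None
  end.

Definition is_node (t : rtree) (p : seq nat) : bool := isSome (subt t p).

(* ancestor-or-self = prefix; nearest common ancestor = longest common prefix *)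
Fixpoint nca (p q : seq nat) : seq nat :=
  match p, q with
  | a :: p', b :: q' => if a == b then a :: nca p' q' else [::]
  | _, _ => [::]
  end.

Definition top_minor (T' T : rtree) : Prop :=
  exists f : seq nat -> seq nat,
    (forall u, is_node T' u -> is_node T (f u)) /\
    (forall u v, is_node T' u -> is_node T' v -> f u = f v -> u = v) /\
    (forall u v, is_node T' u -> is_node T' v -> f (nca u v) = nca (f u) (f v)).

Fixpoint nleaves (t : rtree) : nat :=
  let: Node ts := t in if ts is [::] then 1 else sumn (map nleaves ts).

Fixpoint no_deg1 (t : rtree) : bool :=
  let: Node ts := t in (size ts != 1) && all no_deg1 ts.

(* number of nodes of degree (number of children) at least d *)
Fixpoint nbig (d : nat) (t : rtree) : nat :=
  let: Node ts := t in (d <= size ts) + sumn (map (nbig d) ts).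

Definition universal (m : nat) (T : rtree) : Prop :=
  forall T', nleaves T' = m -> no_deg1 T' -> top_minor T' T.

Definition is_min_universal_leaves (m k : nat) : Prop :=
  (exists T, universal m T /\ nleaves T = k) /\
  (forall T, universal m T -> k <= nleaves T).

Definition u (m : nat) : nat :=
  epsilon (inhabits 0) (is_min_universal_leaves m).

(* Main.v *)
Require Import Defs.
From mathcomp Require Import all_boot.
From Stdlib Require Import ClassicalEpsilon.
From mathcomp Require Import zify.
Set Implicit Arguments. Unset Strict Implicit. Unset Printing Implicit Defensive.

Definition leaf := Node [::].

Fixpoint rtree_ind' (P : rtree -> Prop)
  (H : forall ts, (forall x, List.In x ts -> P x) -> P (Node ts)) (t : rtree) : P t :=
  let: Node ts := t in
  H ts ((fix go (ts : seq rtree) : forall x, List.In x ts -> P x :=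
          match ts with
          | [::] => fun x (F : False) => match F with end
          | y :: ys => fun x Hx => match Hx with
                                   | or_introl E => eq_rect y P (rtree_ind' H y) x E
                                   | or_intror Hx' => go ys x Hx' end
          end) ts).

Lemma In_nth (ts : seq rtree) x0 i : i < size ts -> List.In (nth x0 ts i) ts.
Proof.
elim: ts i => [|y ys IH] [|i] //= H; [by left| by right; apply: IH].
Qed.

Lemma ncaC p q : nca p q = nca q p.
Proof.
elim: p q => [|a p IH] [|b q] //=.
case: eqP => [->|ne]; first by rewrite eqxx IH.
by case: eqP => // E; case: ne.
Qed.

Lemma nca_refl p : nca p p = p.
Proof. by elim: p => //= a p ->; rewrite eqxx. Qed.

Lemma nca_pre p q : exists a, p = nca p q ++ a.
Proof.
elim: p q => [|a p IH] [|b q] /=; try by eexists.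
case: eqP => _; last by eexists.
by have [a' {1}->] := IH q; exists a'.
Qed.

Lemma nca_cat p a : nca p (p ++ a) = p.
Proof. by elim: p => //= x p ->; rewrite eqxx. Qed.

Lemma nca_catl w p q : nca (w ++ p) (w ++ q) = w ++ nca p q.
Proof. by elim: w => //= x w ->; rewrite eqxx. Qed.

Lemma nca_size p q : size (nca p q) = size p -> nca p q = p.
Proof.
have [a E] := nca_pre p q => Hs.
have Ha : a = [::].
  by apply/nilP; rewrite /nilp; move/(f_equal size): (E); rewrite size_cat Hs; lia.
by rewrite {2}E Ha cats0.
Qed.

Lemma nca_ext p q b : nca p q <> q -> nca p (q ++ b) = nca p q.
Proof.
elim: p q => [|a p IH] [|x q] /= H.
all: try by [].
all: try by case: H.
case: eqP H => // E H; subst; rewrite IH //.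
by move=> E; apply: H; rewrite E.
Qed.

Lemma nca_ext2 p q a b : nca p q <> p -> nca p q <> q ->
  nca (p ++ a) (q ++ b) = nca p q.
Proof.
move=> H1 H2.
rewrite ncaC nca_ext; last by rewrite ncaC nca_ext.
by rewrite ncaC nca_ext.
Qed.

Lemma subt_cat t p a x : subt t p = Some x -> subt t (p ++ a) = subt x a.
Proof.
elim: p t => [|i p IH] t /=; first by case=> ->.
by case: ifP => // _; apply: IH.
Qed.

Lemma subt_leaf a : subt leaf a = (if a is [::] then Some leaf else None).
Proof. by case: a. Qed.
Section G.
Variable d : nat.
Hypothesis Hd : 1 < d.

Fixpoint g (t : rtree) : nat := let: Node ts := t in (d <= size ts) + foldr maxn 0 (map g ts).
Definition maxg ts := foldr maxn 0 (map g ts).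
Lemma gE ts : g (Node ts) = (d <= size ts) + maxg ts.
Proof. by []. Qed.

Lemma maxg_ge ts i x0 : i < size ts -> g (nth x0 ts i) <= maxg ts.
Proof.
elim: ts i => [|y ys IH] [|i] //= H; first by rewrite leq_maxl.
by rewrite (leq_trans (IH _ H)) // leq_maxr.
Qed.

Lemma maxg_In ts x : List.In x ts -> g x <= maxg ts.
Proof.
elim: ts => [|y ys IH] //= [->|H]; first by rewrite leq_maxl.
by rewrite (leq_trans (IH H)) // leq_maxr.
Qed.

Lemma sumn_map0 (F : rtree -> nat) ts : (forall x, List.In x ts -> F x = 0) -> sumn (map F ts) = 0.
Proof.
elim: ts => //= y ys IH H; rewrite H ?IH //; [by move=> x Hx; apply: H; right | by left].
Qed.

Lemma maxg_le ts M : (forall i, i < size ts -> g (nth leaf ts i) <= M) -> maxg ts <= M.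
Proof.
elim: ts => [|y ys IH] //= H.
rewrite geq_max (H 0) //= IH // => i Hi.
exact: (H i.+1).
Qed.

Lemma maxg_cat ts us : maxg ts <= maxg (ts ++ us).
Proof.
elim: ts => [|y ys IH] //=.
by rewrite geq_max leq_maxl /= (leq_trans IH) // leq_maxr.
Qed.

Lemma maxg_has ts c : 0 < c -> c <= maxg ts ->
  exists2 i, i < size ts & c <= g (nth leaf ts i).
Proof.
move=> Hc; elim: ts => [|y ys IH] /=; first by case: c Hc.
rewrite leq_max; case/orP => [H|H]; first by exists 0.
by have [i Hi Hi'] := IH H; exists i.+1.
Qed.

Lemma g_subt t p x : subt t p = Some x -> g x <= g t.
Proof.
elim: p t => [|i p IH] [ts] /=; first by case=> <-.
case: ifP => // Hi H.
apply: (leq_trans (IH _ H)).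
rewrite (set_nth_default leaf) //.
by rewrite (leq_trans (maxg_ge leaf Hi)) // leq_addl.
Qed.

Lemma nleavesE l : 0 < size l -> nleaves (Node l) = sumn (map nleaves l).
Proof. by case: l. Qed.

Lemma In_filter (P : pred rtree) s x : List.In x (filter P s) -> List.In x s /\ P x.
Proof.
elim: s => //= y s IH; case: ifP => Py /=.
  by case=> [<-|/IH]; tauto.
by move/IH; tauto.
Qed.

Section C.
Variable c : nat.
Hypothesis Hc : 0 < c.

Definition marked t := (d <= size (children t)) && (g t == c).
Definition Pc x := c <= g x.

Lemma marked_child ts i x0 : marked (Node ts) -> i < size ts -> g (nth x0 ts i) < c.
Proof.
rewrite /marked gE /= => /andP [-> /eqP E] Hi.
have := maxg_ge x0 Hi; lia.
Qed.

Fixpoint prune t := let: Node ts := t in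
  if (d <= size ts) && (g (Node ts) == c) then leaf
  else Node (foldr (fun x acc => if c <= g x then prune x :: acc else acc) [::] ts).

Lemma prune_eq ts : prune (Node ts) =
  if marked (Node ts) then leaf else Node (map prune (filter Pc ts)).
Proof.
rewrite /= /marked /=; case: ifP => // _; congr Node.
by elim: ts => //= x ts ->; rewrite /Pc; case: ifP.
Qed.

Fixpoint N t := let: Node ts := t in marked (Node ts) + sumn (map N ts).

Lemma N0 t : g t < c -> N t = 0.
Proof.
elim/rtree_ind': t => ts IH Hg /=.
have -> : marked (Node ts) = false.
  by rewrite /marked; apply/negbTE; rewrite negb_and; apply/orP; right; rewrite neq_ltn Hg.
rewrite add0n; apply: sumn_map0 => x Hx; apply: IH => //.
by rewrite (leq_ltn_trans (maxg_In Hx)) // (leq_ltn_trans _ Hg) // gE leq_addl.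
Qed.

Lemma not_marked_has ts : c <= g (Node ts) -> ~~ marked (Node ts) ->
  exists2 i, i < size ts & c <= g (nth leaf ts i).
Proof.
rewrite /marked gE /= => H1 H2.
apply: maxg_has => //.
move: H1 H2; case: (d <= size ts) => /=; lia.
Qed.

Lemma sumn_filter_N ts : sumn (map N (filter Pc ts)) = sumn (map N ts).
Proof.
elim: ts => //= x ts IH; rewrite /Pc; case: leqP => H /=; first by rewrite IH.
by rewrite N0.
Qed.

Lemma marked_In ts x : marked (Node ts) -> List.In x ts -> g x < c.
Proof.
rewrite /marked gE /= => /andP [-> /eqP E] Hi.
have := maxg_In Hi; lia.
Qed.

Lemma prune_leaves t : c <= g t -> nleaves (prune t) = N t.
Proof.
elim/rtree_ind': t => ts IH Hg.
rewrite prune_eq /=; case: ifP => Hm.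
  by rewrite sumn_map0 // => x Hx; apply: N0; apply: marked_In Hx.
have [i Hi Hci] := not_marked_has Hg (negbT Hm).
have Hne : 0 < size (filter Pc ts).
  rewrite size_filter -has_count.
  by apply/(has_nthP leaf); exists i.
rewrite nleavesE ?size_map // add0n -(sumn_filter_N ts) -map_comp.
have : forall x, List.In x (filter Pc ts) -> nleaves (prune x) = N x.
  by move=> x /In_filter [Hx Px]; apply: IH.
elim: (filter Pc ts) => //= z zs IHz H.
by rewrite H ?IHz //; [move=> x Hx; apply: H; right| left].
Qed.
Fixpoint tr t p := match p with
  | [::] => [::]
  | i :: p' => count Pc (take i (children t)) :: tr (nth t (children t) i) p'
  end.

Definition good t p := exists2 x, subt t p = Some x & c <= g x.

Lemma size_tr t p : size (tr t p) = size p.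
Proof. by elim: p t => //= i p IH t; rewrite IH. Qed.

Lemma count_take_lt (s : seq rtree) i x0 : i < size s -> Pc (nth x0 s i) ->
  count Pc (take i s) < count Pc s.
Proof.
move=> Hi HP; rewrite -{2}(cat_take_drop i s) count_cat (drop_nth x0 Hi) /= HP.
lia.
Qed.

Lemma nth_filter_count (s : seq rtree) i x0 : i < size s -> Pc (nth x0 s i) ->
  nth x0 (filter Pc s) (count Pc (take i s)) = nth x0 s i.
Proof.
elim: s i => [|y s IH] [|i] //= Hi HP; first by rewrite HP.
by case: ifP => Py /=; rewrite ?add1n ?add0n /= IH.
Qed.

Lemma count_take_mono (s : seq rtree) m n : m <= n ->
  count Pc (take m s) <= count Pc (take n s).
Proof.
elim: s m n => [|y s IH] [|m] [|n] //= H.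
by rewrite leq_add2l IH.
Qed.

Lemma count_take_inj (s : seq rtree) i j x0 : i < size s -> j < size s ->
  Pc (nth x0 s i) -> Pc (nth x0 s j) ->
  count Pc (take i s) = count Pc (take j s) -> i = j.
Proof.
have key : forall i j, i < j -> j < size s -> Pc (nth x0 s i) ->
    count Pc (take i s) < count Pc (take j s).
  move=> i' j' Hij Hj Hp.
  have Hi' : i' < size s by apply: ltn_trans Hj.
  apply: (@leq_trans (count Pc (take i'.+1 s))); last exact: count_take_mono.
  by rewrite (take_nth x0 Hi') -cats1 count_cat /= Hp; lia.
move=> Hi Hj Pi Pj E.
case: (ltngtP i j) => // H.
  by have := key _ _ H Hj Pi; rewrite E ltnn.
by have := key _ _ H Hi Pj; rewrite E ltnn.
Qed.

Lemma good_cons ts i p : good (Node ts) (i :: p) ->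
  [/\ i < size ts, good (nth (Node ts) ts i) p, Pc (nth (Node ts) ts i)
    & ~~ marked (Node ts)].
Proof.
case=> x /=; case: ifP => // Hi Hs Hx.
have Hp : Pc (nth (Node ts) ts i) by rewrite /Pc (leq_trans Hx) // (g_subt Hs).
split => //; first by exists x.
apply/negP => Hm.
by have := marked_child (Node ts) Hm Hi; rewrite ltnNge; move: Hp; rewrite /Pc => ->.
Qed.

Lemma K1 t p : good t p -> is_node (prune t) (tr t p).
Proof.
elim: p t => [|i p IH] [ts] Hg //.
have [Hi Hg' Hp Hm] := good_cons Hg.
rewrite prune_eq (negbTE Hm) /is_node /= size_map size_filter.
rewrite (count_take_lt Hi Hp).
rewrite (set_nth_default (prune (Node ts))) ?size_map ?size_filter ?(count_take_lt Hi Hp) //.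
rewrite (nth_map (Node ts)) ?size_filter ?(count_take_lt Hi Hp) //.
rewrite (nth_filter_count Hi Hp).
exact: IH.
Qed.

Lemma K2 t p q : good t p -> good t q -> nca (tr t p) (tr t q) = tr t (nca p q).
Proof.
elim: p t q => [|i p IH] [ts] [|j q] //= Hp Hq.
have [Hi Hg Pi _] := good_cons Hp.
have [Hj Hg' Pj _] := good_cons Hq.
case: (eqVneq i j) => [E|ne].
  by subst j; rewrite eqxx IH.
case: eqP => // E.
by case/eqP: ne; apply: (count_take_inj Hi Hj Pi Pj E).
Qed.

Lemma tr_inj t p q : good t p -> good t q -> tr t p = tr t q -> p = q.
Proof.
move=> Hp Hq E.
have E1 := K2 Hp Hq; rewrite E nca_refl in E1.
have Hs1 : size (nca p q) = size p by rewrite -(size_tr t (nca p q)) -E1 -E size_tr.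
have Hs2 : size (nca q p) = size q by rewrite ncaC -(size_tr t (nca p q)) -E1 size_tr.
by rewrite -(nca_size Hs1) -{2}(nca_size Hs2) ncaC.
Qed.

Section Emb.
Variables (A T : rtree) (f : seq nat -> seq nat).
Hypothesis Hnode : forall u, is_node A u -> is_node T (f u).
Hypothesis Hinj : forall u v, is_node A u -> is_node A v -> f u = f v -> u = v.
Hypothesis Hnca : forall u v, is_node A u -> is_node A v -> f (nca u v) = nca (f u) (f v).

Lemma f_ext u x i : subt A u = Some x -> i < size (children x) ->
  exists j r, f (u ++ [:: i]) = f u ++ j :: r.
Proof.
move=> Hu Hi.
have Nu : is_node A u by rewrite /is_node Hu.
have Nui : is_node A (u ++ [:: i]).
  by rewrite /is_node (subt_cat _ Hu); case: x Hu Hi => xs /= _ ->.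
have E := Hnca Nu Nui; rewrite nca_cat in E.
have [a Ea] := nca_pre (f (u ++ [:: i])) (f u).
rewrite ncaC -E in Ea.
case: a Ea => [|j r] Ea; last by exists j, r.
rewrite cats0 in Ea.
have := Hinj Nui Nu Ea => /(f_equal size); rewrite size_cat /= addn1 => /eqP.
by rewrite -[X in _ == X]addn0 -addn1 eqn_add2l.
Qed.

Lemma emb x u : subt A u = Some x -> exists2 y, subt T (f u) = Some y & g x <= g y.
Proof.
elim/rtree_ind': x u => xs IH u Hu.
have Nu : is_node A u by rewrite /is_node Hu.
have := Hnode Nu; rewrite /is_node; case Hy: (subt T (f u)) => [y|] // _.
exists y => //.
case: y Hy => ys Hy.
have Nui : forall i, i < size xs -> subt A (u ++ [:: i]) = Some (nth leaf xs i).
  by move=> i Hi; rewrite (subt_cat _ Hu) /= Hi (set_nth_default leaf).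
pose J i := nth 0 (f (u ++ [:: i])) (size (f u)).
have HJ : forall i, i < size xs -> exists r, f (u ++ [:: i]) = f u ++ J i :: r.
  move=> i Hi; have [j [r E]] := f_ext Hu (Hi : i < size (children (Node xs))).
  by exists r; rewrite E /J E nth_cat ltnn subnn.
have Hch : forall i, i < size xs ->
    J i < size ys /\ g (nth leaf xs i) <= g (nth leaf ys (J i)).
  move=> i Hi; have [r Er] := HJ i Hi.
  have [z Hz Hgz] := IH _ (In_nth leaf Hi) _ (Nui i Hi).
  move: Hz; rewrite Er (subt_cat _ Hy) /=; case: ifP => // HJi Hz.
  split => //; apply: (leq_trans Hgz); rewrite (set_nth_default leaf) // in Hz.
  exact: g_subt Hz.
have Hsz : size xs <= size ys.
  have -> : size xs = size (map J (iota 0 (size xs))) by rewrite size_map size_iota.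
  rewrite -(size_iota 0 (size ys)).
  apply: uniq_leq_size.
    rewrite map_inj_in_uniq ?iota_uniq // => i i'; rewrite !mem_iota /= !add0n => Hi Hi' EJ.
    have [r Er] := HJ i Hi; have [r' Er'] := HJ i' Hi'.
    apply/eqP; apply/negPn/negP => ne.
    have N1 : is_node A (u ++ [:: i]) by rewrite /is_node Nui.
    have N2 : is_node A (u ++ [:: i']) by rewrite /is_node Nui.
    have := Hnca N1 N2; rewrite nca_catl /= (negbTE ne) cats0 Er Er' EJ nca_catl /= eqxx.
    move/(f_equal size); rewrite size_cat /=; lia.
  move=> j /mapP [i]; rewrite !mem_iota /= !add0n => Hi ->.
  by case: (Hch i Hi).
rewrite !gE leq_add //.
  by case: (leqP d (size xs)) => // H; rewrite (leq_trans H Hsz).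
apply: maxg_le => i Hi.
have [H1 H2] := Hch i Hi.
by rewrite (leq_trans H2) // maxg_ge.
Qed.
End Emb.

Fixpoint catp k := if k is k'.+1 then Node (catp k' :: nseq (d - 1) leaf) else leaf.

Lemma g_catp k : k <= g (catp k).
Proof.
elim: k => //= k IH.
rewrite size_nseq (_ : d <= (d - 1).+1); last by lia.
by rewrite add1n ltnS (leq_trans IH) // leq_maxl.
Qed.

Lemma nleaves_catp k : nleaves (catp k) = k * (d - 1) + 1.
Proof.
elim: k => //= k IH; rewrite IH.
have -> : sumn (map nleaves (nseq (d - 1) leaf)) = d - 1.
  by elim: (d - 1) => //= n ->.
lia.
Qed.

Lemma no_deg1_catp k : no_deg1 (catp k).
Proof.
elim: k => //= k ->; rewrite size_nseq /=.
have -> : d - 1 != 0 by lia.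
by elim: (d - 1).
Qed.

Fixpoint graft t := let: Node ts := t in if ts is [::] then catp c else Node (map graft ts).

Lemma g_graft t : c <= g (graft t).
Proof.
elim/rtree_ind': t => [[|y ys]] IH; first exact: g_catp.
rewrite /= -/graft.
apply: (leq_trans (IH y (or_introl erefl))).
by rewrite (leq_trans (leq_maxl _ (foldr maxn 0 [seq g i | i <- [seq graft i | i <- ys]]))) // leq_addl.
Qed.

Definition K := c * (d - 1) + 1.

Lemma nleaves_graft t : nleaves (graft t) = nleaves t * K.
Proof.
elim/rtree_ind': t => [[|y ys]] IH; first by rewrite /= nleaves_catp mul1n.
have Hl : forall l, (forall x, List.In x l -> nleaves (graft x) = nleaves x * K) ->
  sumn (map nleaves (map graft l)) = sumn (map nleaves l) * K.
  elim=> //= z zs IHz H.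
  rewrite (H z (or_introl erefl)) IHz ?mulnDl // => x Hx.
  by apply: H; right.
rewrite (_ : graft (Node (y :: ys)) = Node (map graft (y :: ys))) //.
rewrite nleavesE // Hl // nleavesE //.
Qed.

Lemma no_deg1_graft t : no_deg1 t -> no_deg1 (graft t) /\ 1 < size (children (graft t)).
Proof.
elim/rtree_ind': t => [[|y ys]] IH.
  move=> _; split; first exact: no_deg1_catp.
  rewrite /graft (_ : c = c.-1.+1) /= ?size_nseq; lia.
rewrite /= -/graft => /andP [H1 /andP [Hy Hys]].
rewrite size_map /=; split; last by move: H1; case: ys {IH Hys}.
rewrite H1 (IH y (or_introl erefl) Hy).1 /=.
elim: ys Hys IH {H1} => //= z zs IHz /andP [Hz Hzs] IH.
rewrite (IH z (or_intror (or_introl erefl)) Hz).1 /= IHz // => x [<-|Hx].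
  by apply: IH; left.
by apply: IH; right; right.
Qed.

Lemma subt_graft t u y : subt t u = Some y -> subt (graft t) u = Some (graft y).
Proof.
elim: u t => [|i u IH] [ts] /=; first by case=> <-.
case: ifP => // Hi H.
case: ts Hi H => // z zs Hi H.
rewrite /= -/graft size_map Hi.
rewrite -map_cons (set_nth_default (graft (Node (z :: zs)))) ?size_map // (nth_map (Node (z :: zs))) //.
exact: IH.
Qed.

Definition bigt S r := Node (children (graft S) ++ nseq r leaf).

Lemma bigt_prop S r : no_deg1 S ->
  [/\ nleaves (bigt S r) = nleaves S * K + r, no_deg1 (bigt S r) &
      forall u y, subt S u = Some y -> exists2 x, subt (bigt S r) u = Some x & c <= g x].
Proof.
move=> HS; have [H1 H2] := no_deg1_graft HS.
have HG := g_graft S.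
rewrite -nleaves_graft /bigt.
case E: (graft S) H1 H2 HG => [ts] H1 H2 HG /=.
move: H2 => /= H2.
split.
- case: ts E H1 HG H2 => [|t0 ts] // _ _ _ _ /=.
  rewrite map_cat sumn_cat addnA; congr (_ + _); by elim: r => //= r ->.
- rewrite size_cat size_nseq; move: H1 => /= /andP [H3 H4].
  apply/andP; split; first by apply/eqP; lia.
  by rewrite all_cat H4 /=; elim: r.
- move=> [|i u] y Hy.
    exists (Node (ts ++ nseq r leaf)) => //.
    apply: (leq_trans HG); rewrite !gE size_cat leq_add //.
      by case: (leqP d (size ts)) => // H; rewrite (leq_trans H) // leq_addr.
    exact: maxg_cat.
  have := subt_graft Hy; rewrite E /=; case: ifP => // Hi H.
  rewrite size_cat (ltn_addr _ Hi) nth_cat Hi (set_nth_default (Node ts)) //.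
  by rewrite H; eexists; last exact: g_graft.
Qed.

Lemma exists_marked x : c <= g x -> exists q, exists2 z, subt x q = Some z & marked z.
Proof.
elim/rtree_ind': x => ts IH Hg.
case Hm: (marked (Node ts)); first by exists [::], (Node ts).
have [i Hi Hci] := not_marked_has Hg (negbT Hm).
have [q [z Hz Hmz]] := IH _ (In_nth leaf Hi) Hci.
exists (i :: q), z => //=.
by rewrite Hi (set_nth_default leaf).
Qed.

Lemma subt_pre t p a y : subt t (p ++ a) = Some y -> exists x, subt t p = Some x.
Proof.
elim: p t => [|i p IH] t /=; first by eexists.
by case: ifP => // _; apply: IH.
Qed.

Definition isleaf (S : rtree) u := if subt S u is Some (Node [::]) then true else false.

Lemma core n T S : universal n T -> K <= n -> nleaves S = n %/ K -> no_deg1 S ->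
  top_minor S (prune T) /\ c <= g T.
Proof.
move=> HU HK HSl HS.
set r := n - n %/ K * K.
have [HA1 HA2 HA3] := bigt_prop r HS.
have [f [Hnode [Hinj Hnca]]] : top_minor (bigt S r) T.
  apply: HU => //; rewrite HA1 HSl /r subnKC //; exact: leq_divM.
set A := bigt S r in HA1 HA2 HA3 Hnode Hinj Hnca.
pose D p := epsilon (inhabits [::]) (fun q => forall y, subt T p = Some y -> c <= g y ->
   exists2 z, subt T (p ++ q) = Some z & marked z).
have HD : forall p y, subt T p = Some y -> c <= g y ->
   exists2 z, subt T (p ++ D p) = Some z & marked z.
  move=> p; apply: (epsilon_spec (inhabits [::]) (fun q => forall y, subt T p = Some y -> c <= g y ->
   exists2 z, subt T (p ++ q) = Some z & marked z)).
  case E: (subt T p) => [y|]; last by exists [::].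
  case: (leqP c (g y)) => Hy; last by exists [::] => y' [<-]; rewrite leqNgt Hy.
  have [q [z Hz Hmz]] := exists_marked Hy.
  by exists q => y' [<-] _; exists z => //; rewrite (subt_cat _ E).
pose G u := if isleaf S u then f u ++ D (f u) else f u.
pose SN u := exists y, subt S u = Some y.
have SA : forall u, SN u -> is_node A u.
  by move=> u [y Hy]; have [x Hx _] := HA3 _ _ Hy; rewrite /is_node Hx.
have Hgood : forall u, SN u -> good T (G u).
  move=> u [y Hy]; have [x Hx Hcx] := HA3 _ _ Hy.
  have [y' Hy' Hg'] := emb Hnode Hinj Hnca Hx.
  have Hcy' : c <= g y' by apply: leq_trans Hg'.
  rewrite /G; case: (isleaf S u); last by exists y'.
  have [z Hz Hmz] := HD _ _ Hy' Hcy'.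
  by exists z => //; move: Hmz => /andP [_ /eqP ->].
have SNpre : forall u a, SN (u ++ a) -> SN u.
  by move=> u a [y Hy]; apply: subt_pre Hy.
have SNnca : forall u v, SN u -> SN (nca u v).
  move=> u v Hu; have [a Ea] := nca_pre u v.
  by apply: (SNpre _ a); rewrite -Ea.
have leafpre : forall w a, SN (w ++ a) -> isleaf S w -> a = [::].
  move=> w a [y Hy]; rewrite /isleaf.
  case Hw: (subt S w) => [[[|z zs]]|] // _.
  by move: Hy; rewrite (subt_cat _ Hw); case: a.
have Hw : forall u v, SN u -> SN v -> u <> v ->
    [/\ isleaf S (nca u v) = false, G (nca u v) = nca (f u) (f v),
        isleaf S u -> f (nca u v) <> f u & isleaf S v -> f (nca u v) <> f v].
  move=> u v Hu Hv ne.
  have Hw1 : isleaf S (nca u v) = false.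
    apply/negbTE/negP => Hl.
    have [a Ea] := nca_pre u v; have [b Eb] := nca_pre v u.
    rewrite ncaC in Eb.
    have Ha : a = [::] by apply: (leafpre _ _ _ Hl); rewrite -Ea.
    have Hb : b = [::] by apply: (leafpre _ _ _ Hl); rewrite -Eb.
    apply: ne; rewrite Ha cats0 in Ea; rewrite Hb cats0 in Eb.
    by rewrite {1}Ea -Eb.
  have Hfw : f (nca u v) = nca (f u) (f v) by apply: Hnca; apply: SA.
  split => //; first by rewrite /G Hw1.
    move=> Hl E; have := Hinj _ _ (SA _ (SNnca _ v Hu)) (SA _ Hu) E => E'.
    by rewrite E' Hl in Hw1.
  move=> Hl E; have := Hinj _ _ (SA _ (SNnca _ v Hu)) (SA _ Hv) E => E'.
  by rewrite E' Hl in Hw1.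
have Gnca : forall u v, SN u -> SN v -> G (nca u v) = nca (G u) (G v).
  move=> u v Hu Hv.
  case: (eqVneq u v) => [<-|ne]; first by rewrite !nca_refl.
  have [Hw1 Hw2 Hw3 Hw4] := Hw u v Hu Hv (elimN eqP ne).
  have Hfw : f (nca u v) = nca (f u) (f v) by apply: Hnca; apply: SA.
  rewrite Hw2 /G.
  case Lu: (isleaf S u); case Lv: (isleaf S v) => //.
  - by rewrite nca_ext2 // -Hfw; [apply: Hw3 | apply: Hw4].
  - by rewrite [nca (f u ++ _) _]ncaC nca_ext ncaC // -Hfw; apply: Hw3.
  - by rewrite nca_ext // -Hfw; apply: Hw4.
have Ginj1 : forall u v, SN u -> SN v -> u <> v -> G (nca u v) = G u -> nca u v = u.
  move=> u v Hu Hv ne E.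
  have [Hw1 Hw2 Hw3 Hw4] := Hw u v Hu Hv ne.
  have Hfw : f (nca u v) = nca (f u) (f v) by apply: Hnca; apply: SA.
  have [a Ea] := nca_pre (f u) (f v).
  rewrite -Hfw in Ea.
  move: E; rewrite {1}/G Hw1 /G.
  case: (isleaf S u) => E.
    have : size (D (f u) ++ a) = 0.
      by move/(f_equal size): Ea; rewrite E -catA size_cat; lia.
    case: (D (f u)) E => // E _; rewrite cats0 in E.
    exact: Hinj _ _ (SA _ (SNnca _ v Hu)) (SA _ Hu) E.
  exact: Hinj _ _ (SA _ (SNnca _ v Hu)) (SA _ Hu) E.
have Ginj : forall u v, SN u -> SN v -> G u = G v -> u = v.
  move=> u v Hu Hv E; apply/eqP; apply/negPn/negP => /eqP ne.
  have E1 : G (nca u v) = G u by rewrite Gnca // E nca_refl.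
  have E2 : G (nca v u) = G v by rewrite Gnca // E nca_refl.
  have := Ginj1 _ _ Hu Hv ne E1; have := Ginj1 _ _ Hv Hu (fun e => ne (esym e)) E2.
  move=> E3 E4; rewrite ncaC in E3; exact: ne (etrans (esym E4) E3).
have SNE : forall u, is_node S u -> SN u.
  by move=> u; rewrite /is_node; case E: (subt S u) => [y|] // _; exists y.
split.
  exists (fun u => tr T (G u)); split; [|split].
  - by move=> u /SNE Hu; apply: K1; apply: Hgood.
  - move=> u v /SNE Hu /SNE Hv E.
    by apply: Ginj => //; apply: (tr_inj (Hgood _ Hu) (Hgood _ Hv)).
  - move=> u v /SNE Hu /SNE Hv.
    by rewrite Gnca // K2 //; apply: Hgood.
have [x Hx Hcx] := Hgood [::] (ex_intro _ S erefl).
by apply: (leq_trans Hcx); apply: g_subt Hx.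
Qed.
End C.

Lemma sum_eq_le1 (a : nat) r : uniq r -> \sum_(c <- r) (a == c) <= 1.
Proof.
elim: r => [|x r IH]; first by rewrite big_nil.
rewrite big_cons /= => /andP [Hx Hr].
case: eqP => [E|_]; last by rewrite add0n IH.
subst x.
rewrite big1_seq // => c /andP [_ Hc].
by apply/eqP; rewrite eqb0; apply/eqP => E; rewrite E Hc in Hx.
Qed.

Lemma sumN (r : seq nat) t : uniq r -> \sum_(c <- r) N c t <= nbig d t.
Proof.
move=> Hr; elim/rtree_ind': t => ts IH.
rewrite (eq_bigr (fun c => marked c (Node ts) + sumn (map (N c) ts))) // big_split /=.
apply: leq_add.
  rewrite /marked /=.
  case: (d <= size ts) => /=; last by rewrite big1.
  exact: sum_eq_le1.
elim: ts IH => [|y ys IHs] IH; first by rewrite big1.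
rewrite /= (eq_bigr (fun c => N c y + sumn (map (N c) ys))) // big_split /=.
apply: leq_add; first by apply: IH; left.
by apply: IHs => x Hx; apply: IH; right.
Qed.
End G.

Lemma u_le m X : universal m X -> u m <= nleaves X.
Proof.
move=> HX.
suff [k0 Hk0] : exists k0, is_min_universal_leaves m k0.
  have := epsilon_spec (inhabits 0) (is_min_universal_leaves m) (ex_intro _ k0 Hk0).
  by rewrite -/(u m) => [[_ H]]; apply: H.
suff H : forall k, (exists Y, universal m Y /\ nleaves Y = k) ->
    exists k0, is_min_universal_leaves m k0.
  by apply: (H (nleaves X)); exists X.
elim/ltn_ind => k IH Hk.
case: (classic (exists Y, universal m Y /\ nleaves Y < k)) => [[Y [HY HYk]]|Hno].
  by apply: (IH (nleaves Y)) => //; exists Y.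
exists k; split => // Y HY.
rewrite leqNgt; apply/negP => HYk; apply: Hno; by exists Y.
Qed.

Definition star m := if m is 1 then leaf else Node (nseq m leaf).

Lemma star_prop m : 0 < m -> nleaves (star m) = m /\ no_deg1 (star m).
Proof.
case: m => [|[|k]] // _; split => //=.
  by congr (_.+1); elim: k => //= k ->.
by elim: k.
Qed.

Theorem lemma6 (n d : nat) (T : rtree) :
  1 <= n -> 2 <= d -> universal n T ->
  \sum_(2 <= s < n.+2 | (s - 1) * (d - 1) + 1 <= n)
     u (n %/ ((s - 1) * (d - 1) + 1)) <= nbig d T.
Proof.
move=> Hn Hd HU.
apply: (@leq_trans (\sum_(2 <= s < n.+2 | (s - 1) * (d - 1) + 1 <= n) N d (s - 1) T)).
  rewrite big_nat_cond [X in _ <= X]big_nat_cond; apply: leq_sum => s /andP [/andP [H2 _] HQ].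
  have Hc : 0 < s - 1 by lia.
  have HK : K d (s - 1) <= n by [].
  have Hm : 0 < n %/ K d (s - 1) by rewrite divn_gt0 // /K addn1.
  have [S1 S2] := star_prop Hm.
  have [_ HgT] := core Hd Hc HU HK S1 S2.
  rewrite -(prune_leaves Hd Hc HgT).
  apply: u_le => S' HS1 HS2.
  exact: (core Hd Hc HU HK HS1 HS2).1.
rewrite -big_filter.
rewrite -(big_map (fun s => s - 1) predT (fun c => N d c T)).
apply: sumN.
rewrite map_inj_in_uniq ?filter_uniq ?iota_uniq // => x y.
rewrite !mem_filter !mem_index_iota => /andP [_ /andP [Hx _]] /andP [_ /andP [Hy _]].
lia.
Qed.
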